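(* Let $(X,d)$ be a compact metric space, $Z=\Delta_f(X)$, and $F:X\rightrightarrows Z$ a correspondence with nonempty values which is non expansive for $d_{KR}$: for all $x,x'\in X$ and $u\in F(x)$ there exists $u'\in F(x')$ with $d_{KR}(u,u')\le d(x,x')$. Then the mixed extension $\hat F$ is $1$-Lipschitz (non expansive) from $(Z,d_{KR})$ to itself: for all $u_1,u_2\in Z$ and $v_1\in\hat F(u_1)$, there exists $v_2\in\hat F(u_2)$ with $d_{KR}(v_1,v_2)\le d_{KR}(u_1,u_2)$.
   Context: $d_{KR}(u,v)=\sup\{\int f\,du-\int f\,dv:\ f:X\to\mathbb R\ 1\text{-Lipschitz}\}$ is the Kantorovich–Rubinstein distance on Borel probabilities on $X$. $\Delta_f(X)$ is the set of finitely supported probabilities on $X$. The mixed extension is $$\hat F(u)=\Big\{\sum_{x}u(x)f(x):\ f:X\to Z,\ f(x)\in\mathrm{conv}\,F(x)\ \forall x\Big\}.$$ *)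

(* Defs.v *)
From Stdlib Require Import Reals List.
Open Scope R_scope.

Fixpoint sumlist {A : Type} (g : A -> R) (l : list A) : R :=
  match l with nil => 0 | a :: l' => g a + sumlist g l' end.

Definition is_metric {X : Type} (d : X -> X -> R) : Prop :=
  (forall x y, 0 <= d x y) /\
  (forall x y, d x y = 0 <-> x = y) /\
  (forall x y, d x y = d y x) /\
  (forall x y z, d x z <= d x y + d y z).

(* compactness = sequential compactness (equivalent for metric spaces) *)
Definition seq_compact {X : Type} (d : X -> X -> R) : Prop :=
  forall s : nat -> X, exists (phi : nat -> nat) (x : X),
    (forall n, (phi n < phi (S n))%nat) /\
    (forall eps, 0 < eps -> exists N, forall n, (N <= n)%nat -> d (s (phi n)) x < eps).

(* measures on X are represented by their weight functions X -> R *)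
Definition supp_list {X : Type} (u : X -> R) (l : list X) : Prop :=
  NoDup l /\ forall x, u x <> 0 -> In x l.

Definition is_fprob {X : Type} (u : X -> R) : Prop :=
  (forall x, 0 <= u x) /\ exists l, supp_list u l /\ sumlist u l = 1.

Definition lipschitz1 {X : Type} (d : X -> X -> R) (f : X -> R) : Prop :=
  forall x y, Rabs (f x - f y) <= d x y.

(* The set { int f du - int f dv : f 1-Lipschitz }; for finitely supported
   u,v, int f du = sum over a support list of u x * f x. *)
Definition KR_set {X : Type} (d : X -> X -> R) (u v : X -> R) (r : R) : Prop :=
  exists f l, lipschitz1 d f /\ supp_list u l /\ supp_list v l /\
    r = sumlist (fun x => u x * f x) l - sumlist (fun x => v x * f x) l.

(* d_KR(u,v) <= c, i.e. c is an upper bound of KR_set (sup <= c). *)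
Definition dKR_le {X : Type} (d : X -> X -> R) (u v : X -> R) (c : R) : Prop :=
  forall r, KR_set d u v r -> r <= c.

(* d_KR(u1,u2) <= d_KR(v1,v2), as a comparison of suprema:
   every upper bound of the second set bounds the first. *)
Definition dKR_le_dKR {X : Type} (d : X -> X -> R) (u1 u2 v1 v2 : X -> R) : Prop :=
  forall c, dKR_le d v1 v2 c -> dKR_le d u1 u2 c.

Definition in_conv {X : Type} (A : (X -> R) -> Prop) (w : X -> R) : Prop :=
  exists l : list (R * (X -> R)),
    (forall p, In p l -> 0 <= fst p /\ A (snd p)) /\
    sumlist fst l = 1 /\
    w = (fun y => sumlist (fun p => fst p * snd p y) l).

Definition mixed_ext {X : Type} (F : X -> (X -> R) -> Prop) (u v : X -> R) : Prop :=
  exists (f : X -> X -> R) (l : list X),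
    (forall x, in_conv (F x) (f x)) /\ supp_list u l /\
    v = (fun y => sumlist (fun x => u x * f x y) l).

(* Main.v *)
Require Import Defs.
From Stdlib Require Import Reals List Lra ClassicalEpsilon Permutation FunctionalExtensionality Classical.
Open Scope R_scope.

Section Sums.
Context {A : Type}.

Lemma sumlist_app (g : A -> R) l1 l2 : sumlist g (l1 ++ l2) = sumlist g l1 + sumlist g l2.
Proof. induction l1; simpl; [lra| rewrite IHl1; lra]. Qed.

Lemma sumlist_ext_in (f g : A -> R) l : (forall x, In x l -> f x = g x) -> sumlist f l = sumlist g l.
Proof. induction l; simpl; intros H; [reflexivity|]. rewrite H, IHl; auto. Qed.

Lemma sumlist_add (f g : A -> R) l : sumlist (fun x => f x + g x) l = sumlist f l + sumlist g l.
Proof. induction l; simpl; [lra| rewrite IHl; lra]. Qed.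

Lemma sumlist_scal (a : R) (f : A -> R) l : sumlist (fun x => a * f x) l = a * sumlist f l.
Proof. induction l; simpl; [lra| rewrite IHl; lra]. Qed.

Lemma sumlist_scalr (a : R) (f : A -> R) l : sumlist (fun x => f x * a) l = sumlist f l * a.
Proof. induction l; simpl; [lra| rewrite IHl; lra]. Qed.

Lemma sumlist_opp (f : A -> R) l : sumlist (fun x => - f x) l = - sumlist f l.
Proof. induction l; simpl; [lra| rewrite IHl; lra]. Qed.

Lemma sumlist_sub (f g : A -> R) l : sumlist (fun x => f x - g x) l = sumlist f l - sumlist g l.
Proof. induction l; simpl; [lra| rewrite IHl; lra]. Qed.

Lemma sumlist_zero (f : A -> R) l : (forall x, In x l -> f x = 0) -> sumlist f l = 0.
Proof. induction l; simpl; intros H; [reflexivity|]. rewrite H by auto; rewrite IHl by auto; lra. Qed.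

Lemma sumlist_nonneg (f : A -> R) l : (forall x, In x l -> 0 <= f x) -> 0 <= sumlist f l.
Proof. induction l; simpl; intros H; [lra|]. pose proof (H a (or_introl eq_refl)).
  assert (0 <= sumlist f l) by auto. lra. Qed.

Lemma sumlist_le (f g : A -> R) l : (forall x, In x l -> f x <= g x) -> sumlist f l <= sumlist g l.
Proof. induction l; simpl; intros H; [lra|]. specialize (H a (or_introl eq_refl)) as H1.
  assert (sumlist f l <= sumlist g l) by auto. lra. Qed.

Lemma sumlist_lt (f g : A -> R) l : (forall x, In x l -> f x <= g x) ->
  (exists x, In x l /\ f x < g x) -> sumlist f l < sumlist g l.
Proof. induction l; simpl; intros H [x [Hx Hlt]]; [contradiction|].
  destruct Hx as [<-|Hx].
  - assert (sumlist f l <= sumlist g l) by (apply sumlist_le; auto). lra.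
  - assert (f a <= g a) by auto. assert (sumlist f l < sumlist g l) by (apply IHl; eauto). lra. Qed.

Lemma sumlist_zero_nonneg (f : A -> R) l : (forall x, In x l -> 0 <= f x) -> sumlist f l = 0 ->
  forall x, In x l -> f x = 0.
Proof. intros H0 Hs x Hx. destruct (H0 x Hx) as [Hp|]; [|auto].
  exfalso. assert (0 < sumlist f l); [|lra].
  replace 0 with (sumlist (fun _ => 0) l) by (apply sumlist_zero; auto).
  apply sumlist_lt; eauto. Qed.

Lemma sumlist_perm (g : A -> R) l l' : Permutation l l' -> sumlist g l = sumlist g l'.
Proof. induction 1; simpl; lra. Qed.

Lemma sumlist_filter (g : A -> R) (p : A -> bool) l : (forall x, In x l -> p x = false -> g x = 0) ->
  sumlist g l = sumlist g (filter p l).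
Proof. induction l; simpl; intros H; [reflexivity|].
  destruct (p a) eqn:E; simpl; rewrite IHl; auto. rewrite H; auto; lra. Qed.

Lemma sumlist_indep (g : A -> R) l1 l2 : NoDup l1 -> NoDup l2 ->
  (forall x, g x <> 0 -> In x l1) -> (forall x, g x <> 0 -> In x l2) ->
  sumlist g l1 = sumlist g l2.
Proof. intros N1 N2 H1 H2.
  set (p := fun x => if Req_dec_T (g x) 0 then false else true).
  assert (Hp : forall x l, In x l -> p x = false -> g x = 0).
  { intros x l _; unfold p; destruct (Req_dec_T (g x) 0); auto; discriminate. }
  rewrite (sumlist_filter g p l1) by (intros; eapply Hp; eauto).
  rewrite (sumlist_filter g p l2) by (intros; eapply Hp; eauto).
  apply sumlist_perm, NoDup_Permutation; try apply NoDup_filter; auto.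
  intros x; rewrite !filter_In; unfold p; destruct (Req_dec_T (g x) 0); split; intros [? ?];
    try discriminate; split; auto. Qed.

End Sums.

Lemma sumlist_map {A B} (g : B -> R) (h : A -> B) l : sumlist g (map h l) = sumlist (fun x => g (h x)) l.
Proof. induction l; simpl; congruence. Qed.

Lemma sumlist_flat_map {A B} (g : B -> R) (h : A -> list B) l :
  sumlist g (flat_map h l) = sumlist (fun x => sumlist g (h x)) l.
Proof. induction l; [reflexivity|]. change (flat_map h (a :: l)) with (h a ++ flat_map h l).
  rewrite sumlist_app, IHl; reflexivity. Qed.

Lemma sumlist_swap {A B} (g : A -> B -> R) l (m : list B) :
  sumlist (fun a => sumlist (fun b => g a b) m) l = sumlist (fun b => sumlist (fun a => g a b) l) m.
Proof. induction l; simpl.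
  - symmetry; apply sumlist_zero; auto.
  - rewrite IHl, <- sumlist_add; reflexivity. Qed.


Lemma sumlist_prod {A B} (g : A * B -> R) l m :
  sumlist g (list_prod l m) = sumlist (fun a => sumlist (fun b => g (a,b)) m) l.
Proof. induction l; simpl; [reflexivity|]. rewrite sumlist_app, sumlist_map, IHl; reflexivity. Qed.

Lemma NoDup_list_prod {A B} (l : list A) (m : list B) : NoDup l -> NoDup m -> NoDup (list_prod l m).
Proof. intros Nl Nm; induction Nl; simpl; [constructor|].
  apply NoDup_app; auto.
  - apply FinFun.Injective_map_NoDup; auto. intros a b E; congruence.
  - intros [a b] Ha Hb. apply in_map_iff in Ha as [y [E _]]. inversion E; subst.
    apply in_prod_iff in Hb as [? _]; contradiction. Qed.

Definition eqd {T} (x y : T) : R := if excluded_middle_informative (x = y) then 1 else 0.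

Lemma sum_delta {T} (g : T -> R) l i : NoDup l -> In i l -> sumlist (fun x => g x * eqd x i) l = g i.
Proof. induction 1; simpl; intros Hi; [contradiction|].
  unfold eqd at 1; destruct (excluded_middle_informative (x = i)).
  - subst. rewrite sumlist_zero; [lra|]. intros y Hy; unfold eqd;
    destruct (excluded_middle_informative (y = i)); [subst; contradiction| lra].
  - destruct Hi as [->|Hi]; [congruence|]. rewrite IHNoDup; auto; lra. Qed.

Section Farkas.
Variables (C I : Type) (L : list C).
Definition pairing (y v : C -> R) := sumlist (fun c => y c * v c) L.

Lemma pairing_lin_l a b y z v :
  pairing (fun c => a * y c - b * z c) v = a * pairing y v - b * pairing z v.
Proof. unfold pairing. rewrite <- !sumlist_scal, <- sumlist_sub. apply sumlist_ext_in; intros; ring. Qed.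

Lemma pairing_lin_r a b y v w :
  pairing y (fun c => a * v c - b * w c) = a * pairing y v - b * pairing y w.
Proof. unfold pairing. rewrite <- !sumlist_scal, <- sumlist_sub. apply sumlist_ext_in; intros; ring. Qed.

Lemma farkas (K : list I) : NoDup K -> forall (A : I -> C -> R) (b : C -> R),
  (exists lam : I -> R, (forall k, In k K -> 0 <= lam k) /\
       forall c, In c L -> b c = sumlist (fun k => lam k * A k c) K) \/
  (exists y, (forall k, In k K -> 0 <= pairing y (A k)) /\ pairing y b < 0).
Proof.
  induction 1 as [|k0 K0 Hk0 NK0 IH]; intros A b.
  - destruct (classic (forall c, In c L -> b c = 0)) as [H|H].
    + left. exists (fun _ => 0). split; [intros k []|]. intros c Hc; simpl; auto.
    + right. apply not_all_ex_not in H as [c0 Hc0].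
      apply imply_to_and in Hc0 as [Hin Hne].
      exists (fun c => - b c). split; [intros k []|].
      unfold pairing. replace 0 with (sumlist (fun _ : C => 0) L) by (apply sumlist_zero; auto).
      apply sumlist_lt.
      * intros c _. assert (0 <= b c * b c) by apply Rle_0_sqr. lra.
      * exists c0; split; auto. assert (0 < b c0 * b c0) by (apply Rsqr_pos_lt; auto). lra.
  - destruct (IH A b) as [[lam [Hl Hb]]|[y [Hy Hyb]]].
    + left. exists (fun k => if excluded_middle_informative (k = k0) then 0 else lam k).
      split.
      * intros k Hk. destruct (excluded_middle_informative (k = k0)); [lra|].
        destruct Hk as [->|Hk]; [congruence|auto].
      * intros c Hc. simpl. destruct (excluded_middle_informative (k0 = k0)); [|congruence].
        rewrite Hb by auto. rewrite Rmult_0_l, Rplus_0_l. apply sumlist_ext_in.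
        intros k Hk. destruct (excluded_middle_informative (k = k0)); [subst; contradiction|auto].
    + destruct (Rle_or_lt 0 (pairing y (A k0))) as [H0|H0].
      { right. exists y. split; auto. intros k [->|Hk]; auto. }
      set (g := - pairing y (A k0)).
      set (A' := fun k c => pairing y (A k) * A k0 c - pairing y (A k0) * A k c).
      set (b' := fun c => pairing y b * A k0 c - pairing y (A k0) * b c).
      destruct (IH A' b') as [[mu [Hm Hb']]|[y' [Hy' Hyb']]].
      * left.
        set (co := (sumlist (fun k => mu k * pairing y (A k)) K0 - pairing y b) / g).
        exists (fun k => if excluded_middle_informative (k = k0) then co else mu k).
        assert (Hco : 0 <= co).
        { unfold co, g. apply Rmult_le_pos; [|left; apply Rinv_0_lt_compat; lra].
          assert (0 <= sumlist (fun k => mu k * pairing y (A k)) K0); [|lra].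
          apply sumlist_nonneg; intros k Hk; apply Rmult_le_pos; auto. }
        split.
        -- intros k Hk. destruct (excluded_middle_informative (k = k0)); auto.
           destruct Hk as [->|Hk]; [congruence|auto].
        -- intros c Hc. simpl. destruct (excluded_middle_informative (k0 = k0)); [|congruence].
           rewrite (sumlist_ext_in _ (fun k => mu k * A k c)).
           2:{ intros k Hk. destruct (excluded_middle_informative (k = k0)); [subst; contradiction|auto]. }
           specialize (Hb' c Hc). unfold b', A' in Hb'.
           rewrite (sumlist_ext_in _ (fun k => (mu k * pairing y (A k)) * A k0 c - pairing y (A k0) * (mu k * A k c))) in Hb' by (intros; ring).
           rewrite sumlist_sub, sumlist_scalr, sumlist_scal in Hb'.
           unfold co. fold g in Hb'. unfold g in *. field_simplify_eq; [|lra]. lra.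
      * right. exists (fun c => pairing y' (A k0) * y c - pairing y (A k0) * y' c).
        split.
        -- intros k [->|Hk]; rewrite pairing_lin_l.
           ++ right; ring.
           ++ specialize (Hy' k Hk). unfold A' in Hy'. rewrite pairing_lin_r in Hy'. lra.
        -- rewrite pairing_lin_l. unfold b' in Hyb'. rewrite pairing_lin_r in Hyb'. lra.
Qed.
End Farkas.

Definition minl {T} (g : T -> R) (j0 : T) (l : list T) : R :=
  fold_right (fun j acc => Rmin (g j) acc) (g j0) l.

Lemma minl_le {T} (g : T -> R) j0 l j : In j l -> minl g j0 l <= g j.
Proof. induction l; simpl; intros H; [contradiction|]. destruct H as [->|H].
  - apply Rmin_l.
  - eapply Rle_trans; [apply Rmin_r| auto]. Qed.

Lemma minl_ge {T} (g : T -> R) j0 l t : In j0 l -> (forall j, In j l -> t <= g j) -> t <= minl g j0 l.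
Proof. intros H0 H. assert (t <= g j0) by auto. clear H0. induction l; simpl; auto.
  apply Rmin_glb; auto with datatypes. Qed.

Lemma eqd_sym {T} (x y : T) : eqd x y = eqd y x.
Proof. unfold eqd; destruct (excluded_middle_informative (x = y)), (excluded_middle_informative (y = x)); subst; congruence. Qed.

Lemma sum_delta' {T} (g : T -> R) l i : NoDup l -> In i l -> sumlist (fun x => g x * eqd i x) l = g i.
Proof. intros; rewrite <- (sum_delta g l i) by auto. apply sumlist_ext_in; intros; rewrite eqd_sym; reflexivity. Qed.

Section Coupling.
Variables (X : Type) (d : X -> X -> R) (Hmet : is_metric d).
Variables (u1 u2 : X -> R) (S : list X) (D : R).
Hypotheses (NS : NoDup S) (P1 : forall x, 0 <= u1 x) (P2 : forall x, 0 <= u2 x)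
  (S1 : forall x, u1 x <> 0 -> In x S) (S2 : forall x, u2 x <> 0 -> In x S)
  (T1 : sumlist u1 S = 1) (T2 : sumlist u2 S = 1)
  (HD : forall r, KR_set d u1 u2 r -> r <= D).

Let C := option (X + X).
Let L : list C := None :: map (fun x => Some (inl x)) S ++ map (fun x => Some (inr x)) S.
Let K : list (option (X * X)) := None :: map Some (list_prod S S).
Let A (k : option (X * X)) (c : C) : R :=
  match k with
  | None => match c with None => 1 | _ => 0 end
  | Some (i, j) => match c with None => d i j | Some (inl x) => eqd i x | Some (inr x) => eqd j x end
  end.
Let b (c : C) : R := match c with None => D | Some (inl x) => u1 x | Some (inr x) => u2 x end.

Lemma pairing_L (y v : C -> R) : pairing C L y v = y None * v None +
  sumlist (fun x => y (Some (inl x)) * v (Some (inl x))) S +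
  sumlist (fun x => y (Some (inr x)) * v (Some (inr x))) S.
Proof. unfold pairing, L. simpl. rewrite sumlist_app, !sumlist_map. ring. Qed.

Lemma NoDup_K : NoDup K.
Proof. constructor.
  - intros H; apply in_map_iff in H as [? [? _]]; discriminate.
  - apply FinFun.Injective_map_NoDup; [intros ? ? E; congruence|]. apply NoDup_list_prod; auto. Qed.

Lemma coupling_exists : exists pi : X -> X -> R,
  (forall x y, In x S -> In y S -> 0 <= pi x y) /\
  (forall x, In x S -> sumlist (fun y => pi x y) S = u1 x) /\
  (forall y, In y S -> sumlist (fun x => pi x y) S = u2 y) /\
  sumlist (fun x => sumlist (fun y => pi x y * d x y) S) S <= D.
Proof.
  destruct Hmet as [Hd0 [Hdeq [Hdsym Htri]]].
  destruct (farkas C (option (X*X)) L K NoDup_K A b) as [[lam [Hl Hb]]|[y [Hy Hyb]]].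
  - exists (fun x y => lam (Some (x, y))).
    assert (HK : forall c, In c L -> b c = lam None * A None c +
       sumlist (fun i => sumlist (fun j => lam (Some (i, j)) * A (Some (i, j)) c) S) S).
    { intros c Hc. rewrite Hb by auto. unfold K. simpl. rewrite sumlist_map, sumlist_prod. reflexivity. }
    split; [|split; [|split]].
    + intros x y Hx Hy. apply (Hl (Some (x,y))). right. apply in_map, in_prod; auto.
    + intros x Hx. assert (Hc : In (Some (inl x)) L) by (right; apply in_app_iff; left; apply in_map_iff; exists x; split; auto).
      specialize (HK _ Hc). simpl in HK. rewrite HK.
      rewrite (sumlist_ext_in (fun i => sumlist (fun j => lam (Some (i, j)) * eqd i x) S) (fun i => sumlist (fun j => lam (Some (i, j))) S * eqd i x)).
      2:{ intros i _. rewrite <- sumlist_scalr. reflexivity. }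
      rewrite sum_delta by auto. ring.
    + intros z Hz. assert (Hc : In (Some (inr z)) L) by (right; apply in_app_iff; right; apply in_map_iff; exists z; split; auto).
      specialize (HK _ Hc). simpl in HK. rewrite HK.
      rewrite (sumlist_ext_in (fun i => sumlist (fun j => lam (Some (i, j)) * eqd j z) S) (fun i => lam (Some (i, z)))).
      2:{ intros i _. apply (sum_delta (fun j => lam (Some (i, j)))); auto. }
      ring.
    + assert (Hc : In None L) by (left; auto).
      specialize (HK _ Hc). simpl in HK.
      assert (0 <= lam None) by (apply Hl; left; auto). lra.
  - exfalso.
    set (al := fun x => y (Some (inl x))). set (be := fun x => y (Some (inr x))). set (la := y None).
    assert (Hla : 0 <= la).
    { specialize (Hy None (or_introl eq_refl)). rewrite pairing_L in Hy. simpl in Hy.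
      rewrite !sumlist_zero in Hy by (intros; ring). unfold la; lra. }
    assert (Hij : forall i j, In i S -> In j S -> 0 <= al i + be j + la * d i j).
    { intros i j Hi Hj. assert (Hk : In (Some (i,j)) K) by (right; apply in_map, in_prod; auto).
      specialize (Hy _ Hk). rewrite pairing_L in Hy. simpl in Hy.
      rewrite !sum_delta' in Hy by auto. unfold al, be, la. lra. }
    rewrite pairing_L in Hyb. simpl in Hyb. fold la in Hyb.
    change (sumlist (fun x => al x * u1 x) S) with (sumlist (fun x => y (Some (inl x)) * u1 x) S) in Hyb.
    fold al be in Hyb.
    destruct Hla as [Hla|Hla0].
    +
      assert (j0 : X) by (destruct S; [simpl in T1; lra| exact x]).
      assert (Hj0 : exists j0, In j0 S) by (destruct S; [simpl in T1; lra| exists x; left; auto]).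
      destruct Hj0 as [j1 Hj1].
      set (phi := fun z => minl (fun j => d z j + be j / la) j1 S).
      assert (HKR : KR_set d u1 u2 (sumlist (fun x => u1 x * phi x) S - sumlist (fun x => u2 x * phi x) S)).
      { exists phi, S. split; [|split; [split; auto|split; [split; auto| reflexivity]]].
        intros z z'. unfold phi. apply Rabs_le. split.
        - assert (minl (fun j => d z' j + be j / la) j1 S - d z z' <= minl (fun j => d z j + be j / la) j1 S); [|lra].
          apply minl_ge; auto. intros j Hj. pose proof (minl_le (fun j => d z' j + be j / la) j1 S j Hj).
          simpl in H. pose proof (Htri z' z j). rewrite (Hdsym z' z) in H0. lra.
        - assert (minl (fun j => d z j + be j / la) j1 S - d z z' <= minl (fun j => d z' j + be j / la) j1 S); [|lra].
          apply minl_ge; auto. intros j Hj. pose proof (minl_le (fun j => d z j + be j / la) j1 S j Hj).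
          simpl in H. pose proof (Htri z z' j). lra. }
      apply HD in HKR.
      assert (E1 : sumlist (fun x => u1 x * (- al x / la)) S <= sumlist (fun x => u1 x * phi x) S).
      { apply sumlist_le; intros i Hi. apply Rmult_le_compat_l; auto. unfold phi. apply minl_ge; auto.
        intros j Hj. specialize (Hij i j Hi Hj). apply (Rmult_le_reg_l la); auto.
        field_simplify; try lra. }
      assert (E2 : sumlist (fun x => u2 x * phi x) S <= sumlist (fun x => u2 x * (be x / la)) S).
      { apply sumlist_le; intros j Hj. apply Rmult_le_compat_l; auto. unfold phi.
        pose proof (minl_le (fun j0 => d j j0 + be j0 / la) j1 S j Hj). simpl in H.
        assert (d j j = 0) by (apply Hdeq; auto). lra. }
      rewrite (sumlist_ext_in (fun x => u1 x * (- al x / la)) (fun x => (-1/la) * (al x * u1 x))) in E1 by (intros; field; lra).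
      rewrite (sumlist_ext_in (fun x => u2 x * (be x / la)) (fun x => (1/la) * (be x * u2 x))) in E2 by (intros; field; lra).
      rewrite sumlist_scal in E1, E2.
      assert (la * D < la * ((-1 / la) * sumlist (fun x => al x * u1 x) S - 1 / la * sumlist (fun x => be x * u2 x) S)).
      { replace (la * ((-1 / la) * sumlist (fun x => al x * u1 x) S - 1 / la * sumlist (fun x => be x * u2 x) S))
          with (- sumlist (fun x => al x * u1 x) S - sumlist (fun x => be x * u2 x) S) by (field; lra). unfold al, be; lra. }
      apply Rmult_lt_reg_l in H; [lra|exact Hla].
    +
      rewrite <- Hla0 in Hyb.
      assert (Hs : 0 <= sumlist (fun i => sumlist (fun j => u1 i * u2 j * (al i + be j)) S) S).
      { apply sumlist_nonneg; intros i Hi; apply sumlist_nonneg; intros j Hj.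
        specialize (Hij i j Hi Hj). rewrite <- Hla0 in Hij.
        apply Rmult_le_pos; [apply Rmult_le_pos; auto|lra]. }
      rewrite (sumlist_ext_in (fun i => sumlist _ S)
        (fun i => (u1 i * al i) * sumlist u2 S + u1 i * sumlist (fun j => be j * u2 j) S)) in Hs.
      2:{ intros i _. rewrite <- sumlist_scal, <- sumlist_scal, <- sumlist_add. apply sumlist_ext_in; intros; ring. }
      rewrite sumlist_add, sumlist_scalr, sumlist_scalr, T2, T1 in Hs.
      rewrite (sumlist_ext_in (fun x => u1 x * al x) (fun x => al x * u1 x)) in Hs by (intros; ring).
      unfold al, be in *; lra.
Qed.
End Coupling.

Lemma cid {T} (P : T -> Prop) : (exists x, P x) -> {x | P x}.
Proof. apply constructive_indefinite_description. Qed.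

Lemma sumlist_scal2 {A} (a b : R) (f : A -> R) l : a * sumlist f l * b = sumlist (fun x => a * f x * b) l.
Proof. rewrite <- sumlist_scal, <- sumlist_scalr. reflexivity. Qed.

Lemma sumlist_dbl {A B} (a b : R) (g : A -> B -> R) (m : A -> list B) l :
  a * sumlist (fun x => sumlist (g x) (m x)) l * b = sumlist (fun x => sumlist (fun p => a * g x p * b) (m x)) l.
Proof. rewrite sumlist_scal2. apply sumlist_ext_in; intros. rewrite sumlist_scal2. reflexivity. Qed.

Theorem mainTheorem13 (X : Type) (d : X -> X -> R)
  (Hmet : is_metric d) (Hcomp : seq_compact d)
  (F : X -> (X -> R) -> Prop)
  (HFZ : forall x u, F x u -> is_fprob u)
  (HFne : forall x, exists u, F x u)
  (HFnonexp : forall x x' u, F x u ->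
     exists u', F x' u' /\ dKR_le d u u' (d x x')) :
  forall u1 u2 v1, is_fprob u1 -> is_fprob u2 -> mixed_ext F u1 v1 ->
    exists v2, mixed_ext F u2 v2 /\ dKR_le_dKR d v1 v2 u1 u2.
Proof.
  intros u1 u2 v1 [P1 [la1 [[Na1 Sa1] Ta1]]] [P2 [la2 [[Na2 Sa2] Ta2]]] [f1 [l1 [Hf1 [[N1 Sl1] Hv1]]]].
  pose proof Hmet as [Hd0 [Hdeq [Hdsym Htri]]].
  set (dec := fun x y : X => excluded_middle_informative (x = y)).
  set (S := nodup dec (la1 ++ la2)).
  assert (NS : NoDup S) by apply NoDup_nodup.
  assert (S1 : forall x, u1 x <> 0 -> In x S).
  { intros x Hx; apply nodup_In, in_app_iff; auto. }
  assert (S2 : forall x, u2 x <> 0 -> In x S).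
  { intros x Hx; apply nodup_In, in_app_iff; auto. }
  assert (T1 : sumlist u1 S = 1) by (rewrite <- Ta1; apply sumlist_indep; auto).
  assert (T2 : sumlist u2 S = 1) by (rewrite <- Ta2; apply sumlist_indep; auto).
  (* weak duality bound *)
  assert (Hbound : forall r, KR_set d u1 u2 r ->
            r <= sumlist (fun x => sumlist (fun y => u1 x * u2 y * d x y) S) S).
  { intros r [g [l [Hg [[Nl Sg1] [[_ Sg2] Hr]]]]]. subst r.
    rewrite (sumlist_indep (fun x => u1 x * g x) l S), (sumlist_indep (fun x => u2 x * g x) l S); auto;
      try (intros x Hx; apply Sg1; intros E; apply Hx; rewrite E; ring);
      try (intros x Hx; apply Sg2; intros E; apply Hx; rewrite E; ring);
      try (intros x Hx; apply S1; intros E; apply Hx; rewrite E; ring);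
      try (intros x Hx; apply S2; intros E; apply Hx; rewrite E; ring).
    assert (E1 : sumlist (fun x => u1 x * g x) S = sumlist (fun x => sumlist (fun y => u1 x * u2 y * g x) S) S).
    { apply sumlist_ext_in; intros x _.
      rewrite (sumlist_ext_in (fun y => u1 x * u2 y * g x) (fun y => (u1 x * g x) * u2 y)) by (intros; ring).
      rewrite sumlist_scal, T2; ring. }
    assert (E2 : sumlist (fun y => u2 y * g y) S = sumlist (fun x => sumlist (fun y => u1 x * u2 y * g y) S) S).
    { rewrite sumlist_swap. apply sumlist_ext_in; intros y _.
      rewrite (sumlist_ext_in (fun x => u1 x * u2 y * g y) (fun x => (u2 y * g y) * u1 x)) by (intros; ring).
      rewrite sumlist_scal, T1; ring. }
    rewrite E1, E2, <- sumlist_sub. apply sumlist_le; intros x _. rewrite <- sumlist_sub.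
    apply sumlist_le; intros y _. 
    replace (u1 x * u2 y * g x - u1 x * u2 y * g y) with (u1 x * u2 y * (g x - g y)) by ring.
    apply Rmult_le_compat_l; [apply Rmult_le_pos; auto|].
    pose proof (Hg x y). pose proof (Rle_abs (g x - g y)). lra. }
  destruct (completeness (KR_set d u1 u2)) as [D [HDub HDl]].
  { exists (sumlist (fun x => sumlist (fun y => u1 x * u2 y * d x y) S) S). exact Hbound. }
  { exists 0, (fun _ => 0), S. split; [intros x y; rewrite Rminus_0_r, Rabs_R0; auto|].
    split; [split; auto|]. split; [split; auto|].
    rewrite !sumlist_zero by (intros; ring). ring. }
  destruct (coupling_exists X d Hmet u1 u2 S D NS P1 P2 S1 S2 T1 T2 HDub) as [pi [Hpi0 [Hrow [Hcol Hcost]]]].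
  set (L1 := fun x => proj1_sig (cid _ (Hf1 x))).
  assert (HL1 : forall x, (forall p, In p (L1 x) -> 0 <= fst p /\ F x (snd p)) /\
        sumlist fst (L1 x) = 1 /\ f1 x = (fun y => sumlist (fun p => fst p * snd p y) (L1 x))).
  { intros x. exact (proj2_sig (cid _ (Hf1 x))). }
  assert (HG : forall x y w, exists w', F x w -> F y w' /\ dKR_le d w w' (d x y)).
  { intros x y w. destruct (classic (F x w)) as [H|H].
    - destruct (HFnonexp x y w H) as [w' Hw']. exists w'; auto.
    - destruct (HFne y) as [w' _]. exists w'. intros; contradiction. }
  set (G := fun x y w => proj1_sig (cid _ (HG x y w))).
  assert (HGp : forall x y w, F x w -> F y (G x y w) /\ dKR_le d w (G x y w) (d x y)).
  { intros x y w. exact (proj2_sig (cid _ (HG x y w))). }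
  set (w0 := fun y => proj1_sig (cid _ (HFne y))).
  assert (Hw0 : forall y, F y (w0 y)) by (intros y; exact (proj2_sig (cid _ (HFne y)))).
  set (M := fun y => flat_map (fun x => map (fun p => (pi x y / u2 y * fst p, G x y (snd p))) (L1 x)) S).
  set (f2 := fun y => if Rlt_dec 0 (u2 y) then (fun z => sumlist (fun p => fst p * snd p z) (M y)) else w0 y).
  set (v2 := fun z => sumlist (fun y => u2 y * f2 y z) S).
  exists v2. split.
  { exists f2, S. split; [|split; [split; auto|reflexivity]].
    intros y. unfold f2. destruct (Rlt_dec 0 (u2 y)) as [Hu|Hu].
    - assert (Hy : In y S) by (apply S2; lra).
      exists (M y). split; [|split; [|reflexivity]].
      + intros q Hq. unfold M in Hq. apply in_flat_map in Hq as [x [Hx Hq]].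
        apply in_map_iff in Hq as [p [<- Hp]]. simpl.
        destruct (proj1 (HL1 x) p Hp) as [Hp0 HFp]. split.
        * apply Rmult_le_pos; auto. apply Rmult_le_pos; [apply Hpi0; auto| left; apply Rinv_0_lt_compat; auto].
        * apply HGp; auto.
      + unfold M. rewrite sumlist_flat_map.
        rewrite (sumlist_ext_in _ (fun x => pi x y / u2 y)).
        * unfold Rdiv. rewrite sumlist_scalr. rewrite Hcol by auto. field. lra.
        * intros x Hx. rewrite sumlist_map. simpl. rewrite sumlist_scal, (proj1 (proj2 (HL1 x))). ring.
    - exists ((1, w0 y) :: nil). split; [|split].
      + intros p [<-|[]]; simpl; split; auto; lra.
      + simpl; ring.
      + apply functional_extensionality; intros z; simpl; ring. }
  intros c Hc r [h [l [Hh [[Nl Sv1] [[_ Sv2] Hr]]]]].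
  apply Rle_trans with D; [| apply HDl; exact Hc].
  set (W := flat_map (fun x => map snd (L1 x)) S ++
            flat_map (fun x => flat_map (fun y => map (fun p => G x y (snd p)) (L1 x)) S) S).
  assert (HW1 : forall x p, In x S -> In p (L1 x) -> In (snd p) W).
  { intros x p Hx Hp. apply in_app_iff; left. apply in_flat_map. exists x; split; auto. apply in_map; auto. }
  assert (HW2 : forall x y p, In x S -> In y S -> In p (L1 x) -> In (G x y (snd p)) W).
  { intros x y p Hx Hy Hp. apply in_app_iff; right. apply in_flat_map. exists x; split; auto.
    apply in_flat_map. exists y; split; auto. apply in_map_iff. exists p; split; auto. }
  assert (HWf : forall w, In w W -> is_fprob w).
  { intros w Hw. apply in_app_iff in Hw as [Hw|Hw].
    - apply in_flat_map in Hw as [x [Hx Hw]]. apply in_map_iff in Hw as [p [<- Hp]].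
      eapply HFZ, (proj1 (HL1 x) p Hp).
    - apply in_flat_map in Hw as [x [Hx Hw]]. apply in_flat_map in Hw as [y [Hy Hw]].
      apply in_map_iff in Hw as [p [<- Hp]]. eapply HFZ, HGp, (proj1 (HL1 x) p Hp). }
  assert (Hsl : forall w : X -> R, exists l, is_fprob w -> supp_list w l).
  { intros w. destruct (classic (is_fprob w)) as [[_ [l0 [H0 _]]]|H]; [exists l0; auto| exists nil; intros; contradiction]. }
  set (sl := fun w => proj1_sig (cid _ (Hsl w))).
  set (T := nodup dec (l ++ flat_map sl W)).
  assert (NT : NoDup T) by apply NoDup_nodup.
  assert (HTl : forall z, In z l -> In z T).
  { intros z Hz. apply nodup_In, in_app_iff; auto. }
  assert (HTW : forall w z, In w W -> w z <> 0 -> In z T).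
  { intros w z Hw Hz. apply nodup_In, in_app_iff; right. apply in_flat_map. exists w; split; auto.
    destruct (proj2_sig (cid _ (Hsl w)) (HWf w Hw)) as [_ Hs]. apply Hs; auto. }
  set (I := fun w : X -> R => sumlist (fun z => w z * h z) T).
  assert (Hkey : forall x y p, In x S -> In y S -> In p (L1 x) -> I (snd p) - I (G x y (snd p)) <= d x y).
  { intros x y p Hx Hy Hp. destruct (HGp x y (snd p) (proj2 (proj1 (HL1 x) p Hp))) as [_ Hle].
    apply Hle. exists h, T. split; [exact Hh|]. split; [hnf; split; auto; intros z Hz; apply (HTW (snd p) z); [apply (HW1 x p)|]; auto|].
    split; [hnf; split; auto; intros z Hz; apply (HTW (G x y (snd p)) z); [apply (HW2 x y p)|]; auto|reflexivity]. }
  set (J1 := fun x => sumlist (fun p => fst p * I (snd p)) (L1 x)).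
  set (J2 := fun x y => sumlist (fun p => fst p * I (G x y (snd p))) (L1 x)).
  assert (Er : r = sumlist (fun z => v1 z * h z) T - sumlist (fun z => v2 z * h z) T).
  { rewrite Hr. f_equal; apply sumlist_indep; auto; intros z Hz; try apply HTl; [apply Sv1|apply Sv1|apply Sv2|apply Sv2]; intros E; apply Hz; rewrite E; ring. }
  assert (Ev1 : sumlist (fun z => v1 z * h z) T = sumlist (fun x => sumlist (fun y => pi x y * J1 x) S) S).
  { subst v1.
    rewrite (sumlist_ext_in _ (fun z => sumlist (fun x => u1 x * f1 x z * h z) S)).
    2:{ intros z _. rewrite <- sumlist_scalr. apply sumlist_indep; auto; intros x Hx;
        [apply Sl1|apply S1]; intros E; apply Hx; rewrite E; ring. }
    rewrite sumlist_swap. apply sumlist_ext_in; intros x Hx.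
    rewrite sumlist_scalr, Hrow by auto.
    rewrite (proj2 (proj2 (HL1 x))). cbv beta.
    rewrite (sumlist_ext_in _ (fun z => sumlist (fun p => u1 x * (fst p * snd p z) * h z) (L1 x))).
    2:{ intros z _. apply sumlist_scal2. }
    rewrite sumlist_swap. unfold J1. rewrite <- sumlist_scal. apply sumlist_ext_in; intros p _.
    unfold I. rewrite <- !sumlist_scal. apply sumlist_ext_in; intros; ring. }
  assert (Ev2 : sumlist (fun z => v2 z * h z) T = sumlist (fun x => sumlist (fun y => pi x y * J2 x y) S) S).
  { unfold v2.
    rewrite (sumlist_ext_in _ (fun z => sumlist (fun y => u2 y * f2 y z * h z) S)).
    2:{ intros z _. rewrite <- sumlist_scalr. reflexivity. }
    rewrite sumlist_swap. symmetry. rewrite sumlist_swap. apply sumlist_ext_in; intros y Hy.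
    unfold f2. destruct (Rlt_dec 0 (u2 y)) as [Hu|Hu].
    - unfold M. 
      rewrite (sumlist_ext_in (fun z => u2 y * _ * h z)
        (fun z => sumlist (fun x => sumlist (fun p => (pi x y * fst p) * (G x y (snd p) z * h z)) (L1 x)) S)).
      2:{ intros z _. rewrite sumlist_flat_map.
          rewrite (sumlist_ext_in (fun x => sumlist _ (map _ (L1 x)))
             (fun x => sumlist (fun p => (pi x y / u2 y * fst p) * G x y (snd p) z) (L1 x)))
             by (intros; rewrite sumlist_map; reflexivity).
          rewrite sumlist_dbl. apply sumlist_ext_in; intros x _. apply sumlist_ext_in; intros p _.
          field. lra. }
      rewrite sumlist_swap. apply sumlist_ext_in; intros x _.
      rewrite sumlist_swap. unfold J2. rewrite <- sumlist_scal. apply sumlist_ext_in; intros p _.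
      unfold I. rewrite sumlist_scal. ring.
    - assert (Hu0 : u2 y = 0) by (pose proof (P2 y); lra).
      rewrite (sumlist_zero (fun a => u2 y * w0 y a * h a) T) by (intros; rewrite Hu0; ring).
      apply sumlist_zero. intros x Hx.
      rewrite (sumlist_zero_nonneg (fun x => pi x y) S) by (auto; rewrite Hcol; auto). ring. }
  rewrite Er, Ev1, Ev2, <- sumlist_sub. eapply Rle_trans; [|exact Hcost].
  apply sumlist_le; intros x Hx. rewrite <- sumlist_sub. apply sumlist_le; intros y Hy.
  rewrite <- Rmult_minus_distr_l. apply Rmult_le_compat_l; [apply Hpi0; auto|].
  unfold J1, J2. rewrite <- sumlist_sub.
  rewrite <- (Rmult_1_l (d x y)), <- (proj1 (proj2 (HL1 x))), <- sumlist_scalr.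
  apply sumlist_le; intros p Hp. rewrite <- Rmult_minus_distr_l.
  apply Rmult_le_compat_l; [apply (proj1 (HL1 x) p Hp)|]. apply Hkey; auto.
Qed.
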